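(* Let $t \geq 3$ be an integer and let $G$ be a finite, simple, connected graph that does not contain the path $P_t$ on $t$ vertices as an induced subgraph. Then in the game of cops and robbers on $G$, $t-2$ cops have a strategy that captures the robber in at most $t-1$ moves.
   Context: The game of cops and robbers on a finite simple graph $G$ with $k$ cops and one robber: first each cop chooses a starting vertex, then the robber chooses a starting vertex; thereafter the players alternate turns, starting with the cops. On the cops' turn, each cop either stays at its vertex or moves to an adjacent vertex; on the robber's turn, the robber either stays at his vertex or moves to an adjacent vertex. The cops capture the robber (and win) if at some point a cop occupies the same vertex as the robber. A ''move'' counts one turn of the cop player (the initial placement of the cops counting as the first move). $P_t$ denotes the path graph on $t$ vertices, and ''induced subgraph'' has its usual meaning. *)

(* Defs.v *)
From mathcomp Require Import all_boot.
Set Implicit Arguments. Unset Strict Implicit. Unset Printing Implicit Defensive.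

Definition simple_graph (T : finType) (e : rel T) : Prop :=
  symmetric e /\ irreflexive e.

Definition connected_graph (T : finType) (e : rel T) : Prop :=
  0 < #|T| /\ forall x y : T, connect e x y.

Definition has_induced_path (T : finType) (e : rel T) (t : nat) : Prop :=
  exists f : 'I_t -> T, injective f /\
    forall i j : 'I_t, e (f i) (f j) = ((i.+1 == j) || (j.+1 == i)).

Definition cops_pos (T : finType) (k : nat) := {ffun 'I_k -> T}.

Definition caught (T : finType) (k : nat) (C : cops_pos T k) (r : T) : Prop :=
  exists i : 'I_k, C i = r.

Definition cop_step (T : finType) (e : rel T) (k : nat) (C C' : cops_pos T k) : Prop :=
  forall i : 'I_k, C' i = C i \/ e (C i) (C' i).

Definition robber_step (T : finType) (e : rel T) (r r' : T) : Prop :=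
  r' = r \/ e r r'.

(* cops_win e n C r : with the cops at C, the robber at r and the cops to
   play, the cops can force capture within at most n further cop moves
   (capture happening either when a cop lands on the robber or when the
   robber lands on a cop). *)
Fixpoint cops_win (T : finType) (e : rel T) (k : nat) (n : nat)
    (C : cops_pos T k) (r : T) : Prop :=
  match n with
  | 0 => caught C r
  | n'.+1 => caught C r \/
      exists C' : cops_pos T k, cop_step e C C' /\
        (caught C' r \/
         forall r' : T, robber_step e r r' -> cops_win e n' C' r')
  end.

(* k cops capture the robber in at most m moves, where the initial
   placement of the cops counts as the first move: the cops choose a
   placement C0, then for every starting vertex r0 of the robber the cops
   can force capture within m - 1 further cop moves. *)
Definition cops_capture_within (T : finType) (e : rel T) (k m : nat) : Prop :=
  exists C0 : cops_pos T k, forall r0 : T, cops_win e (m.-1) C0 r0.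

(* Main.v *)
Require Import Defs.
From mathcomp Require Import all_boot.
From mathcomp Require Import zify.
Set Implicit Arguments. Unset Strict Implicit.

Definition far (T : finType) (e : rel T) (P : seq T) (w : T) : bool :=
  all (fun v => (v != w) && ~~ e v w) P.

Definition induced (T : finType) (e : rel T) (x0 : T) (P : seq T) : Prop :=
  uniq P /\ forall a b, a < size P -> b < size P ->
    e (nth x0 P a) (nth x0 P b) = (a.+1 == b) || (b.+1 == a).

Definition conf (T : finType) (k : nat) (x0 : T) (P0 : seq T) (v : T) : cops_pos T k :=
  [ffun j : 'I_k => nth x0 (rcons P0 v) (minn j (size P0))].

Lemma split_last (T : eqType) (p : pred T) (s : seq T) :
  has p s -> exists s1 u s2, [/\ s = s1 ++ u :: s2, p u & ~~ has p s2].
Proof.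
elim: s => [|x s IH] //= /orP [px|hs].
  case hs: (has p s).
    have [s1 [u [s2 [-> pu ns]]]] := IH hs.
    by exists (x :: s1), u, s2.
  by exists [::], x, s; rewrite hs.
have [s1 [u [s2 [-> pu ns]]]] := IH hs.
by exists (x :: s1), u, s2.
Qed.

Lemma induced_ext (T : finType) (e : rel T) (x0 : T) (P : seq T) (x y : T) :
  simple_graph e -> induced e x0 (rcons P x) -> far e P y -> e x y -> y != x ->
  induced e x0 (rcons (rcons P x) y).
Proof.
move=> [esym eirr] [hu hi] hf hxy hyx.
have hyP : forall a, a < size P -> ~~ e (nth x0 P a) y /\ nth x0 P a != y.
  move=> a ha; have := allP hf (nth x0 P a) (mem_nth x0 ha).
  by case/andP => -> ->.
split.
  rewrite rcons_uniq hu andbT mem_rcons in_cons negb_or hyx /=.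
  apply/negP => /(nthP x0) [a ha hay].
  by have [_ /eqP] := hyP a ha.
rewrite !size_rcons => a b ha hb.
have key : forall a, a < (size P).+1 ->
    e (nth x0 (rcons (rcons P x) y) a) y = (a == size P).
  move=> c hc; rewrite nth_rcons size_rcons hc nth_rcons.
  case: ltnP => hc2.
    have [/negbTE -> _] := hyP c hc2.
    by symmetry; apply/negbTE/eqP; lia.
  have -> : c == size P by apply/eqP; lia.
  by [].
have hyy : nth x0 (rcons (rcons P x) y) (size P).+1 = y.
  by rewrite nth_rcons size_rcons ltnn eqxx.
case: (ltnP a (size P).+1) => ha2; case: (ltnP b (size P).+1) => hb2.
- rewrite nth_rcons size_rcons ha2 [nth _ _ b]nth_rcons size_rcons hb2.
  by apply: hi; rewrite size_rcons.
- have -> : b = (size P).+1 by lia.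
  rewrite hyy key //; apply/eqP/idP; lia.
- have -> : a = (size P).+1 by lia.
  rewrite hyy esym key //; apply/eqP/idP; lia.
- have -> : a = (size P).+1 by lia.
  have -> : b = (size P).+1 by lia.
  by rewrite hyy eirr; symmetry; apply/negbTE; lia.
Qed.

Lemma conf_step (T : finType) (e : rel T) (k : nat) (x0 : T) P0 v u :
  e v u -> cop_step e (conf k x0 P0 v) (conf k x0 (rcons P0 v) u).
Proof.
move=> hvu j; rewrite !ffunE size_rcons.
case: (leqP j (size P0)) => hj.
  left; have -> : minn j (size P0).+1 = j by lia.
  by rewrite (nth_rcons x0 (rcons P0 v)) size_rcons ltnS hj.
right; have -> : minn j (size P0).+1 = (size P0).+1 by lia.
try have -> : minn j (size P0) = size P0 by lia.
by rewrite (nth_rcons x0 (rcons P0 v)) size_rcons ltnn eqxx nth_rcons ltnn eqxx.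
Qed.

Lemma capture (T : finType) (e : rel T) (k n : nat) (x0 : T) P0 v r :
  size P0 < k -> 0 < n -> ~~ far e (rcons P0 v) r ->
  cops_win e n (conf k x0 P0 v) r.
Proof.
move=> hk hn /allPn [p hp]; rewrite negb_and negbK => hpr.
have ha : index p (rcons P0 v) < k.
  by move: hp; rewrite -index_mem size_rcons => h; exact: leq_trans h hk.
set ia := Ordinal ha.
have hc : conf k x0 P0 v ia = p.
  rewrite ffunE /=.
  have -> : minn (index p (rcons P0 v)) (size P0) = index p (rcons P0 v).
    by move: hp; rewrite -index_mem size_rcons ltnS => h; apply/minn_idPl.
  exact: nth_index.
case: n hn => // n _ /=.
case/orP: hpr => [/eqP hpr | /negPn hpr].
  by left; exists ia; rewrite hc.
right; exists [ffun j => if j == ia then r else conf k x0 P0 v j]; split.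
  move=> j; rewrite ffunE; case: eqP => [->|_]; last by left.
  by right; rewrite hc.
by left; exists ia; rewrite ffunE eqxx.
Qed.

Lemma induced_has (T : finType) (e : rel T) (x0 : T) t P :
  induced e x0 P -> size P = t -> has_induced_path e t.
Proof.
move=> [hu hi] hs; subst t.
exists (fun i : 'I_(size P) => nth x0 P i); split.
  by move=> i j /eqP; rewrite nth_uniq // => /eqP /val_inj.
by move=> i j; apply: hi.
Qed.

Lemma far_rcons (T : finType) (e : rel T) P v x :
  far e (rcons P v) x = ((v != x) && ~~ e v x) && far e P x.
Proof. by rewrite /far all_rcons. Qed.

Lemma key (t : nat) (T : finType) (e : rel T) (x0 : T) :
  simple_graph e -> ~ has_induced_path e t ->
  forall n (P0 : seq T) (v r : T), size P0 + n = t - 2 -> 0 < n ->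
  induced e x0 (rcons P0 v) ->
  (~~ far e (rcons P0 v) r \/
   exists s, [/\ path e v s, s != [::], last v s = r &
                 all (fun w => far e P0 w && (w != v)) s]) ->
  cops_win e n (conf (t - 2) x0 P0 v) r.
Proof.
move=> hG hnp n; elim: n => [|n IH] P0 v r hsz hn hind hr //.
have hk : size P0 < t - 2 by lia.
case hfar: (far e (rcons P0 v) r); last first.
  by apply: capture => //; rewrite hfar.
case: hr => [|[s [hp hs0 hlast hall]]]; first by rewrite hfar.
have hhas : has (e v) s by case: s hp hs0 {hlast hall} => //= w s /andP [-> _].
have [s1 [u [s2 [hsdef hvu hn2]]]] := split_last hhas.
subst s; clear hhas hs0.
case: s2 hn2 hlast hall hp => [|w s2] hn2 hlast hall hp.
  move: hfar; rewrite /far all_rcons -hlast last_cat /= => /andP [/andP [_ /negP]].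
  by rewrite hvu.
move: hp; rewrite cat_path /= => /andP [_ /and3P [_ huw hpw]].
have hin : forall x, x \in u :: w :: s2 -> far e P0 x && (x != v).
  by move=> x hx; apply: (allP hall); rewrite mem_cat hx orbT.
have [hfu huv] := andP (hin u (mem_head _ _)).
have [hfw hwv] := andP (hin w (mem_behead (s := u :: w :: s2) (mem_head _ _))).
have hnvw : ~~ e v w by move: hn2 => /= /norP [].
have hwu : w != u by apply: contraNneq hnvw => ->.
have hind2 := induced_ext hG hind hfu hvu huv.
have hfw2 : far e (rcons P0 v) w by rewrite /far all_rcons eq_sym hwv hnvw.
have hind3 := induced_ext hG hind2 hfw2 huw hwu.
have hn' : 0 < n.
  case: n {IH} hsz hn => // hsz _.
  exfalso; apply: hnp; apply: (induced_has hind3).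
  rewrite !size_rcons.
  move: hsz; move: (size P0) => m.
  clear; lia.
right; exists (conf (t - 2) x0 (rcons P0 v) u); split; first exact: conf_step.
right => r' hr'.
apply: IH => //.
  rewrite size_rcons; move: hsz; move: (size P0) => m; clear; lia.
case hf': (far e (rcons (rcons P0 v) u) r'); last by left.
right.
have hgood : forall x, x \in w :: s2 -> far e (rcons P0 v) x && (x != u).
  move=> x hx; have /andP [hfx hxv] := hin x (mem_behead (s := u :: w :: s2) hx).
  have hnvx : ~~ e v x by apply: (hasPn hn2).
  rewrite far_rcons eq_sym hxv hnvx hfx /=.
  by apply: contraNneq hnvx => ->.
move: hlast; rewrite last_cat /= => hlast.
case: hr' => [-> | her].
  exists (w :: s2); split; [by rewrite /= huw hpw | by [] | by [] | by apply/allP].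
exists (rcons (w :: s2) r'); split.
- by rewrite rcons_path /= huw hpw /= hlast.
- by [].
- by rewrite last_rcons.
- rewrite all_rcons; apply/andP; split; last by apply/allP.
  move: hf'; rewrite far_rcons => /andP [/andP [hur' _] ->].
  by rewrite eq_sym hur'.
Qed.

Unset Implicit Arguments.

Theorem mainTheorem1 (t : nat) (T : finType) (e : rel T) :
  3 <= t ->
  simple_graph e ->
  connected_graph e ->
  ~ has_induced_path e t ->
  cops_capture_within e (t - 2) (t - 1).
Proof.
move=> ht hG [hc hconn] hnp.
have /card_gt0P [v1 _] := hc.
exists (conf (t - 2) v1 [::] v1) => r0.
have -> : (t - 1).-1 = t - 2 by clear -ht; lia.
apply: (key (x0 := v1)) => //.
- by clear -ht; lia.
- split => // a b; rewrite /= !ltnS !leqn0 => /eqP -> /eqP ->.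
  by rewrite hG.2.
case: (eqVneq r0 v1) => [-> | hne].
  by left; rewrite /far /= eqxx.
right.
have /connectP [p hp hl] := hconn v1 r0.
rewrite hl in hne *; move: hne.
case: (shortenP hp) => p' hp' hu _ hne.
exists p'; split => //.
- by case: p' {hp' hu} hne => //=; rewrite eqxx.
- apply/allP => x hx; rewrite /far /=.
  by move: hu => /= /andP [hnin _]; apply: contraNneq hnin => <-.
Qed.
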